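(* Let $k\ge1$ and let $a_1,\dots,a_k,b_1,\dots,b_k$ be $2k$ distinct integers. Put $D=\prod_{i=1}^k\prod_{j=1}^k|a_i-b_j|$. Then $$D\ge (2/3)^k\bigl(1!\,2!\cdots(2k-1)!\bigr)^{1/2}.$$ *)

(* Defs.v *)
From mathcomp Require Import all_boot all_order all_algebra.
From mathcomp Require Import reals.

(* Main.v *)
Require Import Defs.
From mathcomp Require Import all_boot all_order all_algebra.
From mathcomp Require Import reals.
From mathcomp Require Import algC sesquilinear spectral ring lra zify.
Import Order.TTheory GRing.Theory Num.Theory.
Local Open Scope ring_scope.
Local Open Scope sesquilinear_scope.
Lemma mxMct_diag (C : numClosedFieldType) m n (M : 'M[C]_(m, n)) i :
  (M *m M^t*) i i = \sum_(j < n) `|M i j| ^+ 2.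
Proof. by rewrite !mxE; apply: eq_bigr => j _; rewrite !mxE normCK. Qed.

Lemma hadamard (C : numClosedFieldType) n (A : 'M[C]_n) :
  `|\det A| ^+ 2 <= \prod_(i < n) \sum_(j < n) `|A i j| ^+ 2.
Proof.
set Q := schmidt A.
have Qu : Q \is unitarymx := schmidt_unitarymx A (leqnn n).
have /unitarymxP QQ := Qu.
have QQ' : Q^t* *m Q = 1%:M := mulmx1C QQ.
set L := A *m Q^t*.
have AL : A = L *m Q by rewrite /L -mulmxA QQ' mulmx1.
have detQ : `|\det Q| ^+ 2 = 1.
  rewrite normCK; have := congr1 determinant QQ.
  by rewrite det_mulmx det1 det_map_mx det_tr.
have LL : L *m L^t* = A *m A^t*.
  by rewrite /L trmx_mul map_mxM mulmxA -(mulmxA A) trmxCK QQ' mulmx1.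
have Ltrig : is_trig_mx L.
  apply/is_trig_mxP => i j ij.
  have H1 : (row i A <= \sum_(k < n | (k <= i)%N) <<row k Q>>)%MS := row_schmidt_sub A i.
  case/sub_sumsmxP: H1 => u Hu.
  have -> : L i j = (row i A *m (row j Q)^t*) 0 0.
    by rewrite !mxE; apply: eq_bigr => l _; rewrite !mxE.
  rewrite Hu mulmx_suml summxE big1 // => k ki.
  have gk : (<<row k Q>> <= row k Q)%MS by rewrite genmxE.
  have orth : row k Q *m (row j Q)^t* = 0.
    apply/matrixP => a b; rewrite !ord1 !mxE.
    have := congr1 (fun M : 'M[C]_n => M k j) QQ; rewrite !mxE => E.
    have kj : k != j by rewrite neq_ltn (leq_ltn_trans ki ij).
    transitivity ((k == j)%:R : C); last by rewrite (negbTE kj).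
    by rewrite -E; apply: eq_bigr => l _; rewrite !mxE.
  by rewrite -(mulmxKpV gk) -!mulmxA orth !mulmx0 mxE.
rewrite {1}AL det_mulmx normrM exprMn detQ mulr1 det_trig // normr_prod -prodrXl.
apply: ler_prod => i _; rewrite exprn_ge0 //=.
rewrite -mxMct_diag -LL mxMct_diag (bigD1 i) //= lerDl sumr_ge0 // => j _.
by rewrite exprn_ge0.
Qed.
Lemma cauchy_det (F : fieldType) n (x y : 'I_n -> F) :
  (forall i j, x i != y j) ->
  \det (\matrix_(i, j) (x i - y j)^-1) * \prod_(i < n) \prod_(j < n) (x i - y j)
  = \prod_(i < n) \prod_(j < n | (i < j)%N) ((x j - x i) * (y i - y j)).
Proof.
elim: n x y => [|n IH] x y xy.
  by rewrite det_mx00 !big_ord0 mulr1.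
set x' := fun i : 'I_n => x (lift ord0 i).
set y' := fun i : 'I_n => y (lift ord0 i).
have xy' : forall i j, x' i != y' j by move=> i j; apply: xy.
have nz : forall i j, x i - y j != 0 by move=> i j; rewrite subr_eq0 xy.
set a := (x 0 - y 0)^-1.
set r := \row_(j < n) (x 0 - y' j)^-1.
set cc := \col_(i < n) (x' i - y 0)^-1.
set M' := \matrix_(i < n, j < n) (x' i - y' j)^-1.
have EM : (\matrix_(i, j) (x i - y j)^-1 : 'M_(1 + n)) = block_mx a%:M r cc M'.
  apply/matrixP => i j.
  case: (split_ordP i) => i' ->; case: (split_ordP j) => j' ->;
  rewrite ?block_mxEul ?block_mxEur ?block_mxEdl ?block_mxEdr !mxE ?ord1 ?lshift0 ?rshift1 //.
set c := \col_(i < n) ((x 0 - y 0) / (x' i - y 0)).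
set u := \row_(i < n) ((x' i - x 0) / (x' i - y 0)).
set v := \row_(j < n) ((y 0 - y' j) / (x 0 - y' j)).
have E1 : - c *m a%:M + cc = 0.
  apply/matrixP => i j; rewrite mul_mx_scalar !mxE /a.
  have := nz (lift 0 i) 0; rewrite -/(x' i) => h.
  field; by rewrite h nz.
have E2 : - c *m r + M' = diag_mx u *m M' *m diag_mx v.
  apply/matrixP => i j; rewrite mul_diag_mx mul_mx_diag !mxE big_ord1 !mxE.
  have h1 := nz (lift 0 i) 0; have h2 := nz 0 (lift 0 j); have h3 := nz (lift 0 i) (lift 0 j).
  rewrite -/(x' i) -/(y' j) in h1 h2 h3.
  by field; rewrite h1 h2 h3.
have LB : block_mx 1%:M 0 (- c) 1%:M *m block_mx a%:M r cc M'
      = block_mx a%:M r 0 (diag_mx u *m M' *m diag_mx v).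
  by rewrite mulmx_block !mul1mx !mul0mx !addr0 E1 E2.
have detM : \det (\matrix_(i, j) (x i - y j)^-1 : 'M_(1 + n))
    = a * (\prod_i u 0 i * \det M' * \prod_j v 0 j).
  rewrite EM; have := congr1 determinant LB.
  rewrite det_mulmx det_lblock !det1 !mul1r => ->.
  by rewrite det_ublock det_scalar1 !det_mulmx !det_diag.
rewrite detM.
have LHSp : \prod_(i < n.+1) \prod_(j < n.+1) (x i - y j) = (x 0 - y 0) * \prod_j (x 0 - y' j) * (\prod_i (x' i - y 0) * \prod_i \prod_j (x' i - y' j)).
  rewrite big_ord_recl big_ord_recl; congr (_ * _); rewrite -big_split /=.
  by apply: eq_bigr => i _; rewrite big_ord_recl.
have RHSp : \prod_(i < n.+1) \prod_(j < n.+1 | (i < j)%N) ((x j - x i) * (y i - y j))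
   = \prod_j ((x' j - x 0) * (y 0 - y' j)) * \prod_(i < n) \prod_(j < n | (i < j)%N) ((x' j - x' i) * (y' i - y' j)).
  rewrite big_ord_recl; congr (_ * _).
    by rewrite big_mkcond big_ord_recl /= mul1r.
  apply: eq_bigr => i _; rewrite big_mkcond big_ord_recl /= [RHS]big_mkcond mul1r.
  by apply: eq_bigr => j _; rewrite /bump !leq0n !add1n ltnS.
have Hu : \prod_i u 0 i * \prod_i (x' i - y 0) = \prod_i (x' i - x 0).
  rewrite -big_split; apply: eq_bigr => i _; rewrite mxE.
  have h1 := nz (lift 0 i) 0; rewrite -/(x' i) in h1.
  exact: divfK.
have Hv : \prod_j v 0 j * \prod_j (x 0 - y' j) = \prod_j (y 0 - y' j).
  rewrite -big_split; apply: eq_bigr => j _; rewrite mxE.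
  have h1 := nz 0 (lift 0 j); rewrite -/(y' j) in h1.
  exact: divfK.
rewrite LHSp RHSp -(IH x' y' xy') big_split /= -Hu -Hv /a.
have h0 := nz 0 0.
rewrite -/M'. by field.

Qed.
Local Close Scope sesquilinear_scope.
Lemma sum_le_const (R : numDomainType) (T : eqType) (t : seq T) (F : T -> R) c :
  (forall d, d \in t -> F d <= c) -> \sum_(d <- t) F d <= (size t)%:R * c.
Proof.
elim: t => [|x t IH] H; first by rewrite big_nil mul0r.
rewrite big_cons /= -addn1 natrD mulrDl mul1r addrC lerD //.
  by apply: IH => d dt; apply: H; rewrite inE dt orbT.
by apply: H; rewrite inE eqxx.
Qed.

Lemma sum_inv_sq_aux (R : realFieldType) (M : nat) (s : seq int) :
  uniq s -> all (fun d => (d != 0) && (absz d <= M)%N) s ->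
  \sum_(d <- s) (((absz d)%:R : R) ^+ 2)^-1 <= 4 - 4 / (M.+1)%:R.
Proof.
elim: M s => [|M IH] s us As.
  case: s us As => [|d s] _; last by case/andP => /andP[]; rewrite -absz_eq0 leqn0 => /negbTE ->.
  by rewrite big_nil divr1 subrr.
rewrite (bigID (fun d => absz d <= M)%N) /=.
have H1 : \sum_(d <- s | (absz d <= M)%N) (((absz d)%:R : R) ^+ 2)^-1 <= 4 - 4 / (M.+1)%:R.
  rewrite -big_filter; apply: IH; first by rewrite filter_uniq.
  rewrite all_filter; apply/allP => d ds /=; apply/implyP => dM.
  by have /andP[-> _] := allP As d ds.
set t := [seq d <- s | ~~ (absz d <= M)%N].
have H2 : \sum_(d <- s | ~~ (absz d <= M)%N) (((absz d)%:R : R) ^+ 2)^-1 <= 2%:R * (((M.+1)%:R : R) ^+ 2)^-1.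
  rewrite -big_filter -/t.
  have tM : forall d, d \in t -> absz d = M.+1.
    move=> d; rewrite mem_filter => /andP[dM ds].
    have /andP[_ dM'] := allP As d ds.
    by apply/eqP; rewrite eqn_leq dM' ltnNge.
  have szt : (size t <= 2)%N.
    have -> : 2%N = size [:: (M.+1)%:Z; - (M.+1)%:Z] by [].
    apply: uniq_leq_size; first by rewrite filter_uniq.
    move=> d /tM; rewrite !inE; case: d => n /=.
      by move=> ->; rewrite eqxx.
    by move=> <-; rewrite NegzE eqxx ?orbT.
  apply: le_trans (@sum_le_const R _ t _ (((M.+1)%:R : R) ^+ 2)^-1 _) _.
    by move=> d /tM ->.
  by rewrite ler_wpM2r ?invr_ge0 ?exprn_ge0 ?ler0n // ler_nat.
apply: le_trans (lerD H1 H2) _.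
set m : R := (M.+1)%:R.
have -> : ((M.+2)%:R : R) = m + 1 by rewrite /m -addn1 natrD.
have m1 : 1 <= m by rewrite /m ler1n.
rewrite -subr_ge0.
have -> : 4 - 4 / (m + 1) - (4 - 4 / m + 2%:R * (m ^+ 2)^-1) = 2 * (m - 1) / (m ^+ 2 * (m + 1)).
  field; apply/andP; split; apply/negP => /eqP; lra.
apply: divr_ge0; first lra.
by apply: mulr_ge0; [apply: exprn_ge0 | ]; lra.
Qed.
Lemma fact_le_prod_aux N (s : seq nat) : uniq s -> all (fun x => 0 < x <= N)%N s ->
  ((size s)`! <= \prod_(x <- s) x)%N.
Proof.
elim: N s => [|N IH] s us As.
  case: s us As => [|x s] _; first by rewrite big_nil.
  by case/andP => /andP[h1 h2]; lia.
have [Ns|Nns] := boolP (N.+1 \in s); last first.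
  apply: IH => //; apply/allP => x xs; have /andP[h1 h2] := allP As x xs.
  have : x != N.+1 by apply: contraNneq Nns => <-.
  by rewrite h1 /=; lia.
have ps := perm_to_rem Ns.
rewrite (perm_big _ ps) (perm_size ps) big_cons /= factS.
set t := rem N.+1 s.
have ut : uniq t := rem_uniq _ us.
have szs : (size s <= N.+1)%N.
  have -> : N.+1 = size (iota 1 N.+1) by rewrite size_iota.
  apply: uniq_leq_size => // x xs; have /andP[h1 h2] := allP As x xs.
  by rewrite mem_iota; lia.
have szt : size s = (size t).+1 by rewrite (perm_size ps).
apply: leq_mul; first by rewrite -szt.
apply: IH => //; apply/allP => x.
rewrite (mem_rem_uniq _ us) inE => /andP[xN xs].
have /andP[h1 h2] := allP As x xs.
by rewrite h1 /=; lia.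
Qed.

Lemma fact_le_prod (s : seq nat) : uniq s -> all (fun x => 0 < x)%N s ->
  ((size s)`! <= \prod_(x <- s) x)%N.
Proof.
move=> us As; apply: (fact_le_prod_aux (\max_(x <- s) x)) => //.
apply/allP => x xs; rewrite (allP As x xs) /=.
exact: (@leq_bigmax_seq _ s xpredT (fun y => y) x xs isT).
Qed.

Definition P2 (s : seq int) : nat :=
  \prod_(u <- s) \prod_(v <- s | v != u) absz (u - v).

Lemma exists_max (s : seq int) : s != [::] -> exists2 m, m \in s & all (fun v => v <= m) s.
Proof.
elim: s => [//|x s IH] _.
case: s IH => [|y s] IH.
  by exists x; rewrite ?inE ?eqxx //= lexx.
have [m ms Am] := IH isT.
have [xm|mx] := leP x m.
  exists m; first by rewrite inE ms orbT.
  by apply/andP; split.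
exists x; first by rewrite inE eqxx.
have H : all (fun v => v <= x) (y :: s).
  by apply/allP => v vs; exact: le_trans (allP Am v vs) (ltW mx).
by move: H; rewrite /= lexx.
Qed.

Lemma P2_perm s t : perm_eq s t -> P2 s = P2 t.
Proof.
move=> pst; rewrite /P2 (perm_big _ pst); apply: eq_bigr => u _.
by rewrite (perm_big _ pst).
Qed.

Lemma P2_cons m t : m \notin t ->
  P2 (m :: t) = ((\prod_(v <- t) absz (m - v)) ^ 2 * P2 t)%N.
Proof.
move=> mt; rewrite /P2 big_cons big_cons eqxx /=.
have -> : \prod_(v <- t | v != m) absz (m - v) = \prod_(v <- t) absz (m - v).
  rewrite big_seq_cond [RHS]big_seq; apply: eq_bigl => v.
  by case vt: (v \in t) => //=; apply: contraNneq mt => <-.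
rewrite expnS expn1 -mulnA; congr (_ * _)%N.
rewrite -big_split /= !big_seq; apply: eq_bigr => u ut.
have mu : m != u by apply: contraNneq mt => ->.
by rewrite big_cons mu -abszN opprB.
Qed.

Lemma superfact n (s : seq int) : size s = n -> uniq s ->
  ((\prod_(i < n) i`!) ^ 2 <= P2 s)%N.
Proof.
elim: n s => [|n IH] s szs us.
  by case: s szs us => // _ _; rewrite big_ord0 /P2 big_nil.
have [m ms Am] : exists2 m, m \in s & all (fun v => v <= m) s.
  by apply: exists_max; case: s szs us.
have ps := perm_to_rem ms.
rewrite (P2_perm _ _ ps) P2_cons; last by rewrite mem_rem_uniq // inE eqxx.
set t := rem m s.
have ut : uniq t := rem_uniq _ us.
have szt : size t = n by have := perm_size ps; rewrite szs /= => -[].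
rewrite big_ord_recr /= expnMn mulnC; apply: leq_mul; last by apply: IH.
rewrite leq_exp2r // -szt -(size_map (fun v => absz (m - v))).
have -> : (\prod_(v <- t) absz (m - v) = \prod_(x <- map (fun v => absz (m - v)) t) x)%N.
  by rewrite big_map.
have tm : forall v, v \in t -> (v < m).
  move=> v; rewrite (mem_rem_uniq _ us) inE => /andP[vm vs].
  by rewrite lt_neqAle vm (allP Am v vs).
apply: fact_le_prod.
  rewrite map_inj_in_uniq // => v1 v2 /tm h1 /tm h2 h; lia.
apply/allP => x /mapP [v /tm vt ->]; lia.
Qed.
Lemma sum_inv_sq (s : seq int) : uniq s -> all (fun d => d != 0) s ->
  \sum_(d <- s) (((absz d)%:R : rat) ^+ 2)^-1 <= 4.
Proof.
move=> us As.
apply: le_trans (sum_inv_sq_aux rat (\max_(d <- s) absz d) s us _) _.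
  apply/allP => d ds; rewrite (allP As d ds) /=.
  exact: (@leq_bigmax_seq _ s xpredT (fun y => absz y) d ds isT).
by rewrite gerBl divr_ge0 ?ler0n.
Qed.

Lemma row_bound k (a b : 'I_k -> int) (hb : injective b)
    (hab : forall i j, a i != b j) i :
  \sum_(j < k) `|((a i)%:~R - (b j)%:~R : algC)^-1| ^+ 2 <= 4.
Proof.
set s := map (fun j => a i - b j) (index_enum 'I_k).
have us : uniq s.
  rewrite map_inj_uniq ?index_enum_uniq // => j1 j2 h.
  by apply: hb; lia.
have As : all (fun d => d != 0) s.
  by apply/allP => d /mapP [j _ ->]; rewrite subr_eq0 hab.
have := sum_inv_sq s us As; rewrite -(ler_rat algC) rmorph_sum big_map rmorph_nat.
apply: le_trans; rewrite le_eqVlt; apply/orP; left; apply/eqP.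
apply: eq_bigr => j _.
by rewrite -intrB normfV -intr_norm -natr_absz exprVn fmorphV rmorphXn rmorph_nat.
Qed.

Lemma stepA k (a b : 'I_k -> int) (hb : injective b) (hab : forall i j, a i != b j) :
  ((\prod_(i < k) \prod_(j < k | (i < j)%N) (absz (a j - a i) * absz (b i - b j))) ^ 2
   <= 4 ^ k * (\prod_(i < k) \prod_(j < k) absz (a i - b j)) ^ 2)%N.
Proof.
have xy : forall i j, ((a i)%:~R : algC) != (b j)%:~R by move=> i j; rewrite eqr_int hab.
have C := cauchy_det _ _ _ _ xy.
have H := hadamard _ _ (\matrix_(i, j) (((a i)%:~R : algC) - (b j)%:~R)^-1).
have Hb : \prod_(i < k) \sum_(j < k) `|(\matrix_(i, j) (((a i)%:~R : algC) - (b j)%:~R)^-1) i j| ^+ 2 <= 4 ^+ k.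
  rewrite (_ : (4 : algC) ^+ k = \prod_(i < k) 4); last by rewrite prodr_const card_ord.
  apply: ler_prod => i _.
  rewrite sumr_ge0 /=; last by move=> j _; rewrite exprn_ge0.
  by under eq_bigr do rewrite mxE; apply: row_bound.
rewrite -(ler_nat algC) natrM !natrX.
have nD : `|\prod_(i < k) \prod_(j < k) (((a i)%:~R : algC) - (b j)%:~R)| = (\prod_(i < k) \prod_(j < k) absz (a i - b j))%:R.
  rewrite natr_prod normr_prod; apply: eq_bigr => i _.
  rewrite natr_prod normr_prod; apply: eq_bigr => j _.
  by rewrite -intrB -intr_norm natr_absz.
have nR : `|\prod_(i < k) \prod_(j < k | (i < j)%N) ((((a j)%:~R : algC) - (a i)%:~R) * ((b i)%:~R - (b j)%:~R))|
   = (\prod_(i < k) \prod_(j < k | (i < j)%N) (absz (a j - a i) * absz (b i - b j)))%:R.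
  rewrite natr_prod normr_prod; apply: eq_bigr => i _.
  rewrite natr_prod normr_prod; apply: eq_bigr => j _.
  by rewrite natrM normrM -!intrB -!intr_norm !natr_absz.
rewrite -nD -nR -C normrM exprMn ler_wpM2r // ?exprn_ge0 //.
exact: le_trans H Hb.
Qed.
Lemma pairs_split k (f : 'I_k -> 'I_k -> nat) :
  (\prod_(i < k) \prod_(j < k | j != i) f i j
   = \prod_(i < k) \prod_(j < k | (i < j)%N) f i j * \prod_(i < k) \prod_(j < k | (i < j)%N) f j i)%N.
Proof.
have -> : (\prod_(i < k) \prod_(j < k | (i < j)%N) f j i = \prod_(i < k) \prod_(j < k | (j < i)%N) f i j)%N.
  under eq_bigr do rewrite big_mkcond.
  rewrite exchange_big /=; apply: eq_bigr => i _.
  by rewrite [RHS]big_mkcond.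
rewrite -big_split /=; apply: eq_bigr => i _.
rewrite (bigID (fun j : 'I_k => (i < j)%N)) /=; congr (_ * _)%N.
  by apply: eq_bigl => j; rewrite -val_eqE /=; case: ltngtP.
by apply: eq_bigl => j; rewrite -val_eqE /=; case: ltngtP.
Qed.

Lemma P2_ab k (a b : 'I_k -> int) (ha : injective a) (hb : injective b) (hab : forall i j, a i != b j) :
  P2 (map a (index_enum 'I_k) ++ map b (index_enum 'I_k))
  = ((\prod_(i < k) \prod_(j < k | (i < j)%N) (absz (a j - a i) * absz (b i - b j))) ^ 2
     * (\prod_(i < k) \prod_(j < k) absz (a i - b j)) ^ 2)%N.
Proof.
rewrite /P2 big_cat !big_map /=.
under eq_bigr do rewrite big_cat !big_map /=.
under [X in (_ * X)%N]eq_bigr do rewrite big_cat !big_map /=.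
rewrite !big_split /=.
have e1 : (\prod_(i < k) \prod_(j < k | a j != a i) absz (a i - a j) = \prod_(i < k) \prod_(j < k | j != i) absz (a i - a j))%N.
  by apply: eq_bigr => i _; apply: eq_bigl => j; rewrite (inj_eq ha).
have e2 : (\prod_(i < k) \prod_(j < k | b j != a i) absz (a i - b j) = \prod_(i < k) \prod_(j < k) absz (a i - b j))%N.
  by apply: eq_bigr => i _; apply: eq_bigl => j; rewrite eq_sym hab.
have e3 : (\prod_(i < k) \prod_(j < k | a j != b i) absz (b i - a j) = \prod_(i < k) \prod_(j < k) absz (a i - b j))%N.
  rewrite exchange_big /=; apply: eq_bigr => i _; apply: eq_big => j; first by rewrite hab.
  by rewrite -abszN opprB.
have e4 : (\prod_(i < k) \prod_(j < k | b j != b i) absz (b i - b j) = \prod_(i < k) \prod_(j < k | j != i) absz (b i - b j))%N.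
  by apply: eq_bigr => i _; apply: eq_bigl => j; rewrite (inj_eq hb).
rewrite e1 e2 e3 e4 !pairs_split.
have s1 : (\prod_(i < k) \prod_(j < k | (i < j)%N) absz (a i - a j) = \prod_(i < k) \prod_(j < k | (i < j)%N) absz (a j - a i))%N.
  by apply: eq_bigr => i _; apply: eq_bigr => j _; rewrite -abszN opprB.
have s2 : (\prod_(i < k) \prod_(j < k | (i < j)%N) absz (b j - b i) = \prod_(i < k) \prod_(j < k | (i < j)%N) absz (b i - b j))%N.
  by apply: eq_bigr => i _; apply: eq_bigr => j _; rewrite -abszN opprB.
rewrite s1 s2.
under [X in (X ^ 2 * _)%N]eq_bigr do rewrite big_split /=.
rewrite big_split /=.
ring.
Qed.
Lemma key_nat k (hk : (1 <= k)%N) (a b : 'I_k -> int)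
    (ha : injective a) (hb : injective b) (hab : forall i j, a i != b j) :
  (\prod_(1 <= m < 2 * k) m`! <= 2 ^ k * (\prod_(i < k) \prod_(j < k) absz (a i - b j)) ^ 2)%N.
Proof.
set s := map a (index_enum 'I_k) ++ map b (index_enum 'I_k).
have szk : size (index_enum 'I_k) = k by rewrite -sum1_size sum1_card card_ord.
have szs : size s = (2 * k)%N by rewrite size_cat !size_map szk mul2n addnn.
have us : uniq s.
  rewrite cat_uniq !map_inj_uniq ?index_enum_uniq //=.
  rewrite andbT; apply/hasPn => x /mapP [j _ ->]; apply/mapP => -[i _ e].
  by move: (hab i j); rewrite e eqxx.
have S := superfact (2 * k) s szs us.
rewrite /s P2_ab // in S.
have A := stepA k a b hb hab.
set X := (\prod_(i < k) \prod_(j < k | (i < j)%N) _)%N in S A.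
set D := (\prod_(i < k) \prod_(j < k) _)%N in S A *.
have -> : (\prod_(1 <= m < 2 * k) m`! = \prod_(i < 2 * k) i`!)%N.
  rewrite -[RHS](big_mkord xpredT (fun i => i`!)) (big_ltn (m := 0)) ?fact0 ?mul1n //; lia.
have e4 : (4 ^ k = (2 ^ k) ^ 2)%N by rewrite -expnM mulnC expnM.
have H : ((\prod_(i < 2 * k) i`!) ^ 2 <= (2 ^ k * D ^ 2) ^ 2)%N.
  apply: leq_trans S _.
  have -> : ((2 ^ k * D ^ 2) ^ 2 = (4 ^ k * D ^ 2) * D ^ 2)%N by rewrite e4; ring.
  by rewrite leq_mul2r A orbT.
by rewrite leq_exp2r in H.
Qed.

Theorem lemma3p2 (R : realType) (k : nat) (hk : (1 <= k)%N)
    (a b : 'I_k -> int)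
    (ha : injective a) (hb : injective b)
    (hab : forall i j, a i != b j) :
  ((2%:R / 3%:R) ^+ k) * Num.sqrt (\prod_(1 <= m < 2 * k) (m`!)%:R)
    <= (\prod_(i < k) \prod_(j < k) `|a i - b j|)%:~R :> R.
Proof.
have K := key_nat k hk a b ha hb hab.
set Sf := (\prod_(1 <= m < 2 * k) m`!)%N in K.
set D := (\prod_(i < k) \prod_(j < k) _)%N in K.
have -> : \prod_(1 <= m < 2 * k) (m`!)%:R = (Sf%:R : R) by rewrite natr_prod.
have -> : ((\prod_(i < k) \prod_(j < k) `|a i - b j|)%:~R : R) = D%:R.
  rewrite /D natr_prod rmorph_prod; apply: eq_bigr => i _.
  rewrite natr_prod rmorph_prod; apply: eq_bigr => j _.
  by rewrite natr_absz.
have K' : (Sf%:R : R) <= 2 ^+ k * (D%:R) ^+ 2.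
  by rewrite -!natrX -natrM ler_nat.
have h0 : (0 : R) <= 2 / 3 by rewrite divr_ge0 ?ler0n.
rewrite -(ler_pXn2r (isT : (0 < 2)%N)) ?nnegrE ?mulr_ge0 ?sqrtr_ge0 ?exprn_ge0 ?ler0n //.
rewrite exprMn sqr_sqrtr ?ler0n // -exprM mulnC exprM.
apply: le_trans (ler_wpM2l (exprn_ge0 _ (exprn_ge0 _ h0)) K') _.
rewrite mulrA -exprMn.
have -> : (2 / 3 : R) ^+ 2 * 2 = 8 / 9 by field.
rewrite ler_piMl ?exprn_ge0 ?ler0n // exprn_ile1 //; first by rewrite divr_ge0 ?ler0n.
by rewrite ler_pdivrMr ?ltr0n // mul1r ler_nat.
Qed.
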